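(* Let $N\ge 2$, $0<p<1\le q$ with $pq<1$. Consider the vector field $g:\mathbb{R}^3\to\mathbb{R}^3$, $$g(Y,Z,W)=\big(Y(W-(N-2)-Y),\ Z(N+pY-Z),\ W(qZ-qN+q+N-W)\big).$$ Then the equilibrium $$\zeta_2=\Big(\frac{2+q}{1-pq},\ N+\frac{p(2+q)}{1-pq},\ N-2+\frac{2+q}{1-pq}\Big)$$ of $\zeta_t=g(\zeta)$ is asymptotically stable (indeed all eigenvalues of the Jacobian $Dg(\zeta_2)$ have negative real part). *)

(* Defs.v *)
From HB Require Import structures.
From mathcomp Require Import all_boot all_order all_algebra.
Set Implicit Arguments. Unset Strict Implicit. Unset Printing Implicit Defensive.
Import Order.TTheory GRing.Theory Num.Theory.
Local Open Scope ring_scope.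

Definition g_field (C : numClosedFieldType) (N : nat) (p q : C) (Y Z W : C)
  : C * C * C :=
  (Y * (W - (N%:R - 2) - Y),
   Z * (N%:R + p * Y - Z),
   W * (q * Z - q * N%:R + q + N%:R - W)).

Definition jac_g (C : numClosedFieldType) (N : nat) (p q : C) (Y Z W : C)
  : 'M[C]_3 :=
  \matrix_(i < 3, j < 3)
   nth 0 (nth [::]
     [:: [:: W - (N%:R - 2) - 2 * Y; 0; Y];
         [:: p * Z; N%:R + p * Y - 2 * Z; 0];
         [:: 0; q * W; q * Z - q * N%:R + q + N%:R - 2 * W]] i) j.

Definition zeta2 (C : numClosedFieldType) (N : nat) (p q : C) : C * C * C :=
  ((2 + q) / (1 - p * q),
   N%:R + p * (2 + q) / (1 - p * q),
   N%:R - 2 + (2 + q) / (1 - p * q)).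

(* Main.v *)
Require Import Defs.
From HB Require Import structures.
From mathcomp Require Import all_boot all_order all_algebra.
From mathcomp Require Import ring lra.
Import Order.TTheory GRing.Theory Num.Theory.
Local Open Scope ring_scope.

Lemma norm_shift (C : numClosedFieldType) (a Y : C) :
  0 <= 'Re a -> 0 < Y -> Y <= `|a + Y|.
Proof.
move=> ha hY.
have hR : 'Re (a + Y) = 'Re a + Y.
  by rewrite raddfD /=; congr (_ + _); apply/Creal_ReP; apply: gtr0_real.
apply: le_trans (leif_Re_Creal (a + Y)).1.
by rewrite hR lerDr.
Qed.

Lemma eig_neg (C : numClosedFieldType) (N : nat) (p q Y Z W a : C) :
  0 < Y -> 0 < Z -> 0 < W -> 0 < p * q -> p * q < 1 ->
  W = N%:R - 2 + Y -> Z = N%:R + p * Y -> q * Z - q * N%:R + q + N%:R - W = 0 ->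
  eigenvalue (jac_g N p q Y Z W) a -> 'Re a < 0.
Proof.
move=> hY hZ hW hpq0 hpq1 eW eZ e3 /eigenvalueP [v hv vn0].
have E k := congr1 (fun M : 'M_(1,3) => M 0 k) hv.
have E0 := E ord0; have E1 := E (lift ord0 ord0); have E2 := E (lift ord0 (lift ord0 ord0)).
move: E0 E1 E2; rewrite !mxE !big_ord_recl !big_ord0 !mxE /=.
set v0 := v 0 ord0. set v1 := v 0 (lift ord0 ord0).
set v2 := v 0 (lift ord0 (lift ord0 ord0)).
rewrite !mulr0 !addr0 !add0r.
move=> E0 E1 E2.
have E0' : (a + Y) * v0 = p * Z * v1.
  have h : W - (N%:R - 2) - 2 * Y = - Y by rewrite eW; ring.
  by rewrite mulrDl -E0 h; ring.
have E1' : (a + Z) * v1 = q * W * v2.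
  have h : N%:R + p * Y - 2 * Z = - Z by rewrite eZ; ring.
  by rewrite mulrDl -E1 h; ring.
have E2' : (a + W) * v2 = Y * v0.
  have h : q * Z - q * N%:R + q + N%:R - 2 * W = - W.
    have -> : q * Z - q * N%:R + q + N%:R - 2 * W = (q * Z - q * N%:R + q + N%:R - W) - W by ring.
    by rewrite e3; ring.
  by rewrite mulrDl -E2 h; ring.
set P := (a + Y) * (a + Z) * (a + W).
set c := p * q * (Y * Z * W).
have H0 : P * v0 = c * v0.
  have -> : P * v0 = (a+Z)*(a+W)*((a+Y)*v0) by rewrite /P; ring.
  rewrite E0'.
  have -> : (a+Z)*(a+W)*(p*Z*v1) = p*Z*(a+W)*((a+Z)*v1) by ring.
  rewrite E1'.
  have -> : p*Z*(a+W)*(q*W*v2) = p*Z*q*W*((a+W)*v2) by ring.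
  rewrite E2' /c; ring.
have H1 : P * v1 = c * v1.
  have -> : P * v1 = (a+Y)*(a+W)*((a+Z)*v1) by rewrite /P; ring.
  rewrite E1'.
  have -> : (a+Y)*(a+W)*(q*W*v2) = q*W*(a+Y)*((a+W)*v2) by ring.
  rewrite E2'.
  have -> : q*W*(a+Y)*(Y*v0) = q*W*Y*((a+Y)*v0) by ring.
  rewrite E0' /c; ring.
have H2 : P * v2 = c * v2.
  have -> : P * v2 = (a+Y)*(a+Z)*((a+W)*v2) by rewrite /P; ring.
  rewrite E2'.
  have -> : (a+Y)*(a+Z)*(Y*v0) = Y*(a+Z)*((a+Y)*v0) by ring.
  rewrite E0'.
  have -> : Y*(a+Z)*(p*Z*v1) = Y * p * Z*((a+Z)*v1) by ring.
  rewrite E1' /c; ring.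
have ePc : P = c.
  apply/eqP; apply: contraNT vn0 => hne.
  have z k (Hk : P * k = c * k) : k = 0.
    move/eqP: Hk; rewrite -subr_eq0 -mulrBl mulf_eq0 subr_eq0 (negbTE hne) /=.
    by move/eqP.
  apply/eqP/rowP => j; rewrite !mxE.
  case: j => [[|[|[|k]]] hk] //.
  - have -> : Ordinal hk = ord0 by apply: val_inj.
    exact: (z _ H0).
  - have -> : Ordinal hk = lift ord0 ord0 by apply: val_inj.
    exact: (z _ H1).
  - have -> : Ordinal hk = lift ord0 (lift ord0 ord0) by apply: val_inj.
    exact: (z _ H2).
rewrite real_ltNge ?Creal_Re ?real0 //; apply/negP => ha.
have hYZW : 0 < Y * Z * W by rewrite !mulr_gt0.
have h1 : Y * Z * W <= `|P|.
  rewrite /P !normrM.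
  apply: ler_pM; [by rewrite mulr_ge0 ?ltW | by rewrite ltW | | exact: norm_shift].
  apply: ler_pM; [by rewrite ltW | by rewrite ltW | exact: norm_shift | exact: norm_shift].
have h2 : `|c| < Y * Z * W.
  rewrite /c gtr0_norm; last exact: mulr_gt0.
  by rewrite -[X in _ < X]mul1r ltr_pM2r.
by move: h1; rewrite ePc => h1; move: (le_lt_trans h1 h2); rewrite ltxx.
Qed.

Theorem lemma7p2 (C : numClosedFieldType) (N : nat) (p q : C)
  (hN : (2 <= N)%N) (hp0 : 0 < p) (hp1 : p < 1) (hq : 1 <= q)
  (hpq : p * q < 1) :
  let '(Y, Z, W) := zeta2 N p q in
  g_field N p q Y Z W = (0, 0, 0) /\
  (forall a : C, eigenvalue (jac_g N p q Y Z W) a -> 'Re a < 0).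
Proof.
rewrite /zeta2.
have hD : 0 < 1 - p * q by rewrite subr_gt0.
have hD0 : 1 - p * q != 0 by rewrite gt_eqF.
have hq0 : 0 < q by apply: lt_le_trans hq.
have hpq0 : 0 < p * q by rewrite mulr_gt0.
set Y := (2 + q) / (1 - p * q).
have hY : 0 < Y by rewrite divr_gt0 // addr_gt0.
have eZ : N%:R + p * (2 + q) / (1 - p * q) = N%:R + p * Y by rewrite /Y mulrA.
rewrite eZ.
set Z := N%:R + p * Y. set W := N%:R - 2 + Y.
have hN2 : 0 <= N%:R - 2 :> C.
  by rewrite subr_ge0 ler_nat.
have hZ : 0 < Z by rewrite /Z ltr_wpDl // mulr_gt0.
have hW : 0 < W by rewrite /W ltr_wpDl.
have e3 : q * Z - q * N%:R + q + N%:R - W = 0.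
  rewrite /W /Z /Y; field; exact: hD0.
split; last by move=> a; apply: eig_neg hY hZ hW hpq0 hpq _ _ e3.
rewrite /g_field e3 mulr0.
have -> : W - (N%:R - 2) - Y = 0 by rewrite /W; ring.
have -> : N%:R + p * Y - Z = 0 by rewrite /Z; ring.
by rewrite !mulr0.
Qed.
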